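(* Let $L\subseteq\Sigma^*$ be a regular language and let $M=(M(L),\le_L)$ be its syntactic ordered monoid. Then $N^1(M)=\Theta(N^1(L))$ as functions of $n$.
   Context: Non-deterministic communication complexity: for $f:X\times Y\to\{0,1\}$ (Alice holds $x\in X$, Bob holds $y\in Y$), $N^1(f)$ is the minimum cost of a non-deterministic protocol for $f$; equivalently, up to an additive constant 2, $N^1(f)=\log_2 C^1(f)$, where $C^1(f)$ is the minimum number of rectangles $S\times T\subseteq X\times Y$ on which $f\equiv 1$ whose union is $f^{-1}(1)$. A finite ordered monoid $(M,\le)$ is a finite monoid with a partial order such that $x\le y$ implies $zx\le zy$ and $xz\le yz$ for all $z\in M$. An order ideal is a subset $I\subseteq M$ such that $y\in I$ and $x\le y$ imply $x\in I$. For a finite ordered monoid $M$ and an order ideal $I$, $N^1(M,I)(n)$ is $N^1$ of the function in which Alice receives $m_1,m_3,\dots,m_{2n-1}\in M$, Bob receives $m_2,m_4,\dots,m_{2n}\in M$, and the value is $1$ iff $m_1m_2\cdots m_{2n}\in I$; $N^1(M)(n)=\max_I N^1(M,I)(n)$ over all order ideals $I$ of $M$. For a language $L\subseteq\Sigma^*$, $N^1(L)(n)$ is $N^1$ of the function in which Alice receives $a_1,a_3,\dots,a_{2n-1}$, Bob receives $a_2,a_4,\dots,a_{2n}$, each $a_i\in\Sigma\cup\{\epsilon\}$ ($\epsilon$ the empty word), and the value is $1$ iff $a_1a_2\cdots a_{2n}\in L$. Asymptotic notation refers to $n\to\infty$. Syntactic ordered monoid: for $L\subseteq\Sigma^*$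 write $x\preceq_L y$ if for all $u,v\in\Sigma^*$, $uyv\in L\Rightarrow uxv\in L$, and $x\equiv_L y$ if $x\preceq_L y$ and $y\preceq_L x$. The syntactic monoid is $M(L)=\Sigma^*/\equiv_L$, and it is ordered by $[x]\le_L[y]$ iff $x\preceq_L y$; $(M(L),\le_L)$ is the syntactic ordered monoid. *)

(* Defs.v *)
From mathcomp Require Import all_boot.
Set Implicit Arguments. Unset Strict Implicit. Unset Printing Implicit Defensive.

Section CC.
Variables (X Y : finType) (f : X -> Y -> bool).

Definition rect := ({set X} * {set Y})%type.

Definition one_cover (R : {set rect}) : bool :=
  [forall r in R, forall x in r.1, forall y in r.2, f x y] &&
  [forall x, forall y, f x y ==> [exists r in R, (x \in r.1) && (y \in r.2)]].

(* The set of all 1-rectangles, which is always a 1-cover. *)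
Definition all_one_rects : {set rect} :=
  [set r : rect | [forall x in r.1, forall y in r.2, f x y]].

Definition C1 : nat :=
  \big[minn/#|all_one_rects|]_(R : {set rect} | one_cover R) #|R|.

(* N^1(f): cost of the canonical non-deterministic protocol
   (guess a rectangle: ceil(log2 C^1) bits, then 2 verification bits). *)
Definition N1 : nat := up_log 2 C1 + 2.
End CC.

Record fin_ord_monoid := FinOrdMonoid {
  mcar :> finType;
  mmul : mcar -> mcar -> mcar;
  mone : mcar;
  mle : rel mcar;
  mmulA : forall x y z, mmul x (mmul y z) = mmul (mmul x y) z;
  mmul1 : forall x, mmul mone x = x;
  mmulr1 : forall x, mmul x mone = x;
  mle_refl : forall x, mle x x;
  mle_trans : forall x y z, mle x y -> mle y z -> mle x z;
  mle_anti : forall x y, mle x y -> mle y x -> x = y;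
  mle_mull : forall x y z, mle x y -> mle (mmul z x) (mmul z y);
  mle_mulr : forall x y z, mle x y -> mle (mmul x z) (mmul y z)
}.

Definition mprod (M : fin_ord_monoid) (s : seq M) : M := foldr (@mmul M) (@mone M) s.

Definition order_ideal (M : fin_ord_monoid) (I : {set M}) : bool :=
  [forall x : M, forall y : M, (y \in I) && mle x y ==> (x \in I)].

Definition interleave (T : Type) (n : nat) (a b : n.-tuple T) : seq T :=
  flatten [seq [:: p.1; p.2] | p <- zip a b].

Definition N1MI (M : fin_ord_monoid) (I : {set M}) (n : nat) : nat :=
  N1 (fun (a b : n.-tuple M) => mprod (interleave a b) \in I).

Definition N1M (M : fin_ord_monoid) (n : nat) : nat :=
  \max_(I : {set M} | order_ideal I) N1MI I n.

(* N^1(L)(n): letters in Sigma + {eps}, eps encoded as None *)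
Definition N1L (S : finType) (L : pred (seq S)) (n : nat) : nat :=
  N1 (fun (a b : n.-tuple (option S)) => L (pmap id (interleave a b))).

Record dfa (S : finType) := Dfa {
  dstate : finType;
  dstart : dstate;
  dfinal : pred dstate;
  dtrans : dstate -> S -> dstate
}.

Definition dfa_accept (S : finType) (A : dfa S) (w : seq S) : bool :=
  @dfinal S A (foldl (@dtrans S A) (@dstart S A) w).

Definition regular (S : finType) (L : pred (seq S)) : Prop :=
  exists A : dfa S, forall w, L w = dfa_accept A w.

Definition synt_le (S : finType) (L : pred (seq S)) (x y : seq S) : Prop :=
  forall u v, L (u ++ y ++ v) -> L (u ++ x ++ v).

(* eta : Sigma^* -> M is a surjective monoid morphism whose induced order is
   exactly <=_L; i.e. (M, mle) is (an isomorphic copy of) Sigma^*/==_L with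
   the order [x] <= [y] iff x <=_L y: the syntactic ordered monoid of L. *)
Definition syntactic_ordered_monoid (S : finType) (L : pred (seq S))
    (M : fin_ord_monoid) (eta : seq S -> M) : Prop :=
  [/\ eta [::] = mone M,
      forall x y, eta (x ++ y) = mmul (eta x) (eta y),
      forall m : M, exists w, eta w = m
    & forall x y, mle (eta x) (eta y) <-> synt_le L x y].

Definition BigTheta (f g : nat -> nat) : Prop :=
  exists c, 0 < c /\ exists N0, forall n, N0 <= n ->
    f n <= c * g n /\ g n <= c * f n.

(* Main.v *)
Require Import Defs.
From mathcomp Require Import all_boot.
Set Implicit Arguments. Unset Strict Implicit. Unset Printing Implicit Defensive.

Section Cov.
Variables (X Y : finType).
Implicit Types (f g h : X -> Y -> bool) (R : {set rect X Y}).

Lemma one_coverP f R :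
  reflect ((forall r x y, r \in R -> x \in r.1 -> y \in r.2 -> f x y) /\
           (forall x y, f x y -> exists2 r, r \in R & (x \in r.1) && (y \in r.2)))
          (one_cover f R).
Proof.
apply: (iffP andP) => [[/forallP H1 /forallP H2]|[H1 H2]]; split.
- move=> r x y rR xr yr.
  by move: (H1 r); rewrite rR /= => /forallP/(_ x); rewrite xr /= => /forallP/(_ y); rewrite yr.
- move=> x y fxy; move: (H2 x) => /forallP/(_ y); rewrite fxy /= => /existsP[r /andP[rR H]].
  by exists r.
- apply/forallP=> r; apply/implyP=> rR; apply/forallP=> x; apply/implyP=> xr.
  apply/forallP=> y; apply/implyP=> yr; exact: H1 rR xr yr.
- apply/forallP=> x; apply/forallP=> y; apply/implyP=> /H2[r rR H].
  by apply/existsP; exists r; rewrite rR.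
Qed.

Lemma bigmin_le (I : eqType) (r : seq I) (P : pred I) (F : I -> nat) x i0 :
  i0 \in r -> P i0 -> \big[minn/x]_(i <- r | P i) F i <= F i0.
Proof.
elim: r => // j r IH; rewrite inE big_cons => /orP[/eqP<-|ir] Pi.
  by rewrite Pi geq_minl.
case: ifP => _; last exact: IH.
by apply: leq_trans (geq_minr _ _) (IH ir Pi).
Qed.

Lemma C1_le f R : one_cover f R -> C1 f <= #|R|.
Proof. by move=> cR; rewrite /C1; apply: bigmin_le => //; rewrite mem_index_enum. Qed.

Lemma all_cover f : one_cover f (all_one_rects f).
Proof.
apply/one_coverP; split.
- move=> r x y; rewrite inE => /forallP/(_ x) H xr; move/implyP: H => /(_ xr) /forallP/(_ y).
  by move/implyP; apply.
- move=> x y fxy; exists ([set x], [set y]); last by rewrite !inE !eqxx.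
  rewrite inE; apply/forallP=> x'; apply/implyP; rewrite inE => /eqP->.
  by apply/forallP=> y'; apply/implyP; rewrite inE => /eqP->.
Qed.

Lemma C1_ex f : exists2 R, one_cover f R & #|R| = C1 f.
Proof.
rewrite /C1; apply: (big_ind (fun v => exists2 R, one_cover f R & #|R| = v)).
- by exists (all_one_rects f) => //; exact: all_cover.
- move=> a b [Ra ca ea] [Rb cb eb]; rewrite /minn; case: ifP => _.
  + by exists Ra. + by exists Rb.
- by move=> R cR; exists R.
Qed.

Lemma C1_const f b : (forall x y, f x y = b) -> C1 f <= 1.
Proof.
move=> fb; case: b fb => fb.
- apply: leq_trans (C1_le (R := [set (setT, setT)]) _) _; last by rewrite cards1.
  apply/one_coverP; split; first by move=> *; rewrite fb.
  by move=> x y _; exists (setT, setT); rewrite ?inE.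
- apply: leq_trans (C1_le (R := set0) _) _; last by rewrite cards0.
  apply/one_coverP; split; first by move=> r x y; rewrite inE.
  by move=> x y; rewrite fb.
Qed.

Lemma C1_or f g h : (forall x y, h x y = f x y || g x y) -> C1 h <= C1 f + C1 g.
Proof.
move=> hE; have [Rf /one_coverP[f1 f2] <-] := C1_ex f.
have [Rg /one_coverP[g1 g2] <-] := C1_ex g.
apply: leq_trans (C1_le (R := Rf :|: Rg) _) _; last first.
  by rewrite -cardsUI leq_addr.
apply/one_coverP; split.
- move=> r x y; rewrite inE hE => /orP[rR|rR] xr yr.
  + by rewrite (f1 r x y).
  + by rewrite (g1 r x y) ?orbT.
- move=> x y; rewrite hE => /orP[/f2|/g2] [r rR H]; exists r => //; by rewrite inE rR ?orbT.
Qed.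

Lemma C1_and f g h : (forall x y, h x y = f x y && g x y) -> C1 h <= C1 f * C1 g.
Proof.
move=> hE; have [Rf /one_coverP[f1 f2] <-] := C1_ex f.
have [Rg /one_coverP[g1 g2] <-] := C1_ex g.
pose F (rs : rect X Y * rect X Y) : rect X Y := (rs.1.1 :&: rs.2.1, rs.1.2 :&: rs.2.2).
apply: leq_trans (C1_le (R := F @: setX Rf Rg) _) _; last first.
  by rewrite -cardsX leq_imset_card.
apply/one_coverP; split.
- move=> r x y /imsetP[[r1 r2]]; rewrite inE /= => /andP[r1R r2R] -> /=.
  rewrite !inE => /andP[x1 x2] /andP[y1 y2].
  by rewrite hE (f1 r1 x y) // (g1 r2 x y).
- move=> x y; rewrite hE => /andP[/f2[r1 r1R /andP[x1 y1]] /g2[r2 r2R /andP[x2 y2]]].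
  exists (F (r1, r2)); first by apply/imsetP; exists (r1, r2); rewrite // inE r1R r2R.
  by rewrite /= !inE x1 x2 y1 y2.
Qed.

Lemma C1_all (J : Type) (s : seq J) (fs : J -> X -> Y -> bool) h :
  (forall x y, h x y = all (fun j => fs j x y) s) -> C1 h <= \prod_(j <- s) C1 (fs j).
Proof.
elim: s h => [|j s IH] h hE.
  by rewrite big_nil; apply: (C1_const (b := true)) => x y; rewrite hE.
rewrite big_cons; apply: leq_trans (C1_and (f := fs j) (g := fun x y => all (fun j => fs j x y) s) _) _.
  by move=> x y; rewrite hE.
by rewrite leq_mul2l IH ?orbT.
Qed.

Lemma C1_has (J : Type) (s : seq J) (fs : J -> X -> Y -> bool) h :
  (forall x y, h x y = has (fun j => fs j x y) s) -> C1 h <= \sum_(j <- s) C1 (fs j).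
Proof.
elim: s h => [|j s IH] h hE.
  rewrite big_nil; apply: leq_trans (C1_le (R := set0) _) _; last by rewrite cards0.
  apply/one_coverP; split; first by move=> r x y; rewrite inE.
  by move=> x y; rewrite hE.
rewrite big_cons; apply: leq_trans (C1_or (f := fs j) (g := fun x y => has (fun j => fs j x y) s) _) _.
  by move=> x y; rewrite hE.
by rewrite leq_add2l IH.
Qed.

End Cov.

Lemma C1_pull (X Y X' Y' : finType) (f : X -> Y -> bool) (g : X' -> Y' -> bool)
  (al : X' -> X) (be : Y' -> Y) :
  (forall x y, g x y = f (al x) (be y)) -> C1 g <= C1 f.
Proof.
move=> gE; have [R /one_coverP[f1 f2] <-] := C1_ex f.
pose F (r : rect X Y) : rect X' Y' := (al @^-1: r.1, be @^-1: r.2).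
apply: leq_trans (C1_le (R := F @: R) _) (leq_imset_card _ _).
apply/one_coverP; split.
- move=> r x y /imsetP[r0 r0R ->]; rewrite !inE => xr yr; rewrite gE; exact: f1 r0R xr yr.
- move=> x y; rewrite gE => /f2[r rR H]; exists (F r); first exact: imset_f.
  by rewrite !inE.
Qed.

Definition il (T : Type) (s t : seq T) : seq T := flatten [seq [:: p.1; p.2] | p <- zip s t].

Lemma il_cat (T : Type) (s1 s2 t1 t2 : seq T) :
  size s1 = size t1 -> il (s1 ++ s2) (t1 ++ t2) = il s1 t1 ++ il s2 t2.
Proof. by move=> H; rewrite /il zip_cat // map_cat flatten_cat. Qed.

Lemma map_il (T U : Type) (f : T -> U) s t : map f (il s t) = il (map f s) (map f t).
Proof. by elim: s t => [|x s IH] [|y t] //=; rewrite IH. Qed.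

Lemma interleaveE (T : Type) n (a b : n.-tuple T) : interleave a b = il a b.
Proof. by []. Qed.

Definition mkT (T : Type) (N : nat) (x0 : T) (s : seq T) : N.-tuple T :=
  insubd (nseq_tuple N x0) s.

Lemma mkTE (T : Type) N (x0 : T) s : size s = N -> tval (mkT N x0 s) = s.
Proof. by move=> H; have := val_insubd (nseq_tuple N x0) s; rewrite H eqxx. Qed.

Lemma sum_le_const (J : Type) (s : seq J) (F : J -> nat) k :
  (forall j, F j <= k) -> \sum_(j <- s) F j <= size s * k.
Proof.
move=> H; elim: s => [|j s IH]; first by rewrite big_nil.
by rewrite big_cons mulSn leq_add.
Qed.

Lemma prod_le_const (J : Type) (s : seq J) (F : J -> nat) k :
  (forall j, F j <= k) -> \prod_(j <- s) F j <= k ^ size s.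
Proof.
move=> H; elim: s => [|j s IH]; first by rewrite big_nil.
by rewrite big_cons expnS leq_mul.
Qed.
Arguments mkT T N x0 s : clear implicits.
Arguments mkT {T} N x0 s.

Lemma expn_le m n e : m <= n -> m ^ e <= n ^ e.
Proof. by move=> h; elim: e => // e IH; rewrite !expnS leq_mul. Qed.

Lemma up_log_mulexp a X c : up_log 2 (a * X ^ c) <= up_log 2 a + c * up_log 2 X.
Proof.
apply: up_log_min => //; rewrite expnD (mulnC c) expnM.
by apply: leq_mul; [apply: up_logP | apply: expn_le; apply: up_logP].
Qed.

Lemma up_log_max1 C : up_log 2 (maxn 1 C) <= up_log 2 C.
Proof.
apply: up_log_min => //; rewrite geq_max expn_gt0 /= up_logP //.
Qed.
Lemma arith c0 c1 u : c0 + c1 * u + 2 <= (c0 + c1 + 1) * (u + 2).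
Proof.
rewrite mulnDr -addnA (addnC (c1 * u)) addnA addnC.
apply: leq_add.
- apply: leq_mul => //; rewrite -addnA; apply: leq_trans (leq_addl c0 _); exact: leq_addr.
- rewrite muln2 -addnn -[2]/(1 + 1) addnA; apply: leq_add; last by rewrite addn1.
  by rewrite leq_add2r leq_addr.
Qed.

Section Main.
Variables (S : finType) (L : pred (seq S)) (M : fin_ord_monoid) (eta : seq S -> M).
Hypotheses (eta_nil : eta [::] = mone M)
  (eta_cat : forall x y, eta (x ++ y) = mmul (eta x) (eta y))
  (eta_surj : forall m : M, exists w, eta w = m)
  (eta_le : forall x y, mle (eta x) (eta y) <-> synt_le L x y).

Local Notation "x ** y" := (mmul x y) (at level 40, left associativity).

Lemma ex_wr (m : M) : exists w, eta w == m.
Proof. by have [w <-] := eta_surj m; exists w. Qed.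

Definition wr (m : M) : seq S := xchoose (ex_wr m).
Lemma eta_wr m : eta (wr m) = m.
Proof. exact: eqP (xchooseP (ex_wr m)). Qed.

Lemma L_le x y : mle (eta x) (eta y) -> L y -> L x.
Proof. by move=> /eta_le H Ly; have := H [::] [::]; rewrite /= !cats0; apply. Qed.

Lemma L_eta x y : eta x = eta y -> L x = L y.
Proof.
move=> E; apply/idP/idP; apply: L_le; rewrite E; exact: mle_refl.
Qed.

Definition EL : {set M} := [set m | L (wr m)].
Lemma EL_L x : (eta x \in EL) = L x.
Proof. by rewrite inE; apply: L_eta; rewrite eta_wr. Qed.

Definition phi (o : option S) : M := if o is Some s then eta [:: s] else mone M.
Definition e (w : seq (option S)) : M := mprod (map phi w).

Lemma mprod_cat (s t : seq M) : mprod (s ++ t) = mprod s ** mprod t.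
Proof.
elim: s => [|x s IH] /=; first by rewrite /mprod /= mmul1.
by rewrite /mprod /= -/(mprod _) IH mmulA.
Qed.

Lemma e_cat s t : e (s ++ t) = e s ** e t.
Proof. by rewrite /e map_cat mprod_cat. Qed.

Lemma e_cons o s : e (o :: s) = phi o ** e s.
Proof. by []. Qed.

Lemma e_pmap w : eta (pmap id w) = e w.
Proof.
elim: w => [|[s|] w IH] /=; first by rewrite eta_nil.
- by rewrite e_cons -IH -eta_cat.
- by rewrite e_cons IH /= mmul1.
Qed.

Lemma L_e w : L (pmap id w) = (e w \in EL).
Proof. by rewrite -EL_L e_pmap. Qed.

Lemma e_il_nones s : e (il s (nseq (size s) None)) = e s.
Proof. by elim: s => [|x s IH] //=; rewrite /il /= -/(il _ _) !e_cons IH /= mmul1. Qed.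

Lemma e_il_nones' s : e (il (nseq (size s) None) s) = e s.
Proof. by elim: s => [|x s IH] //=; rewrite /il /= -/(il _ _) !e_cons IH /= mmul1. Qed.

Lemma e_map_some s : e (map Some s) = eta s.
Proof.
elim: s => [|x s IH] /=; first by rewrite eta_nil.
by rewrite e_cons IH /= -eta_cat.
Qed.

Lemma e_nseq k : e (nseq k None) = mone M.
Proof. by elim: k => //= k IH; rewrite e_cons IH mmul1. Qed.

Definition K : nat := \max_(m : M) size (wr m).
Definition padw (s : seq S) : seq (option S) := map Some s ++ nseq (K - size s) None.

Lemma size_padw m : size (padw (wr m)) = K.
Proof.
rewrite /padw size_cat size_map size_nseq subnKC //.
rewrite /K; by rewrite (bigD1 m) //= leq_maxl.
Qed.

Lemma e_padw s : e (padw s) = eta s.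
Proof. by rewrite /padw e_cat e_map_some e_nseq mmulr1. Qed.

Definition G (Q : pred M) n := fun a b : n.-tuple (option S) => Q (e (interleave a b)).
Definition down (m : M) : pred M := fun x => mle x m.
Arguments G Q n : clear implicits.
Definition Psi n := \max_(m : M) C1 (G (down m) n).
Definition fL n := fun a b : n.-tuple (option S) => L (pmap id (interleave a b)).
Arguments fL n : clear implicits.
Definition cM := #|{: M * M}|.

Lemma C1_Psi m n : C1 (G (down m) n) <= Psi n.
Proof. by rewrite /Psi (bigD1 m) //= leq_maxl. Qed.

Definition dclosed (Q : pred M) := forall x y, Q y -> mle x y -> Q x.

Lemma mle_mul (x1 x2 y1 y2 : M) : mle x1 y1 -> mle x2 y2 -> mle (x1 ** x2) (y1 ** y2).
Proof.
move=> h1 h2; apply: mle_trans (mle_mulr x2 h1) _; exact: mle_mull.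
Qed.

Lemma split_bound Q n1 n2 : dclosed Q ->
  C1 (G Q (n1 + n2)) <= cM * (Psi n1 * Psi n2).
Proof.
move=> dQ.
pose t1 (a : (n1 + n2).-tuple (option S)) : n1.-tuple (option S) := mkT n1 None (take n1 a).
pose t2 (a : (n1 + n2).-tuple (option S)) : n2.-tuple (option S) := mkT n2 None (drop n1 a).
have v1 a : tval (t1 a) = take n1 a by rewrite mkTE // size_takel // size_tuple leq_addr.
have v2 a : tval (t2 a) = drop n1 a by rewrite mkTE // size_drop size_tuple addKn.
pose fs (pr : M * M) := fun a b : (n1 + n2).-tuple (option S) =>
  Q (pr.1 ** pr.2) && (G (down pr.1) n1 (t1 a) (t1 b) && G (down pr.2) n2 (t2 a) (t2 b)).
apply: leq_trans (C1_has (s := enum {: M * M}) (fs := fs) _) _.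
  move=> a b; rewrite /G /fs.
  have -> : interleave a b = il (take n1 a) (take n1 b) ++ il (drop n1 a) (drop n1 b).
    by rewrite interleaveE -il_cat ?cat_take_drop // !size_takel // size_tuple leq_addr.
  rewrite e_cat /G !interleaveE !v1 !v2; apply/idP/hasP.
  - move=> HQ; exists (e (il (take n1 a) (take n1 b)), e (il (drop n1 a) (drop n1 b))).
      by rewrite mem_enum.
    by rewrite /= HQ /down !mle_refl.
  - move=> [[m1 m2] _ /= /and3P[Hq h1 h2]]; apply: dQ Hq _; exact: mle_mul.
rewrite /cM cardE; apply: sum_le_const => pr.
apply: leq_trans (C1_and (f := fun _ _ => Q (pr.1 ** pr.2))
   (g := fun a b => G (down pr.1) n1 (t1 a) (t1 b) && G (down pr.2) n2 (t2 a) (t2 b)) _) _.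
  by [].
have h1 : C1 (fun (_ _ : (n1 + n2).-tuple (option S)) => Q (pr.1 ** pr.2)) <= 1.
  by apply: (C1_const (b := Q (pr.1 ** pr.2))).
apply: leq_trans (leq_mul h1 (leqnn _)) _; rewrite mul1n.
apply: leq_trans (C1_and (f := fun a b => G (down pr.1) n1 (t1 a) (t1 b))
   (g := fun a b => G (down pr.2) n2 (t2 a) (t2 b)) _) _; first by [].
apply: leq_mul; apply: leq_trans (C1_Psi _ _).
- exact: (C1_pull (al := t1) (be := t1)).
- exact: (C1_pull (al := t2) (be := t2)).
Qed.


Lemma down_ctx m x : mle x m =
  all (fun pq : M * M => (pq.1 ** (m ** pq.2) \in EL) ==> (pq.1 ** (x ** pq.2) \in EL))
      (enum {: M * M}).
Proof.
apply/idP/allP.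
- move=> H [p q] _ /=; apply/implyP => Hm.
  have Lm : L (wr p ++ wr m ++ wr q) by rewrite -EL_L !eta_cat !eta_wr.
  have : mle (eta (wr x)) (eta (wr m)) by rewrite !eta_wr.
  move/eta_le => /(_ (wr p) (wr q) Lm).
  by rewrite -EL_L !eta_cat !eta_wr.
- move=> H; suff : mle (eta (wr x)) (eta (wr m)) by rewrite !eta_wr.
  apply/eta_le => u v Lm.
  have Hm : eta u ** (m ** eta v) \in EL by rewrite -(eta_wr m) -!eta_cat EL_L.
  have := H (eta u, eta v); rewrite mem_enum => /(_ isT) /=; rewrite Hm /= => Hx.
  by rewrite -EL_L !eta_cat eta_wr.
Qed.

Lemma ctx_bound m n : C1 (G (down m) n) <= (maxn 1 (C1 (fL (K + n + K)))) ^ cM.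
Proof.
pose fs (pq : M * M) := fun a b : n.-tuple (option S) =>
  (pq.1 ** (m ** pq.2) \in EL) ==> (pq.1 ** (e (interleave a b) ** pq.2) \in EL).
apply: leq_trans (C1_all (s := enum {: M * M}) (fs := fs) _) _.
  by move=> a b; rewrite /G /down /= down_ctx.
rewrite /cM cardE; apply: prod_le_const => -[p q].
rewrite /fs /=; case: (p ** (m ** q) \in EL).
- pose al (a : n.-tuple (option S)) : (K + n + K).-tuple (option S) :=
    mkT (K + n + K) None (padw (wr p) ++ a ++ padw (wr q)).
  pose be (b : n.-tuple (option S)) : (K + n + K).-tuple (option S) :=
    mkT (K + n + K) None (nseq K None ++ b ++ nseq K None).
  apply: leq_trans (leq_maxr 1 _).
  apply: (C1_pull (al := al) (be := be)) => a b /=.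
  have s1 : size (padw (wr p) ++ a ++ padw (wr q)) = K + n + K.
    by rewrite size_cat size_padw size_cat size_padw size_tuple addnA.
  have s2 : size (nseq K (@None S) ++ b ++ nseq K None) = K + n + K.
    by rewrite !size_cat size_nseq size_tuple addnA.
  rewrite /fL /= !interleaveE /al /be !mkTE //.
  rewrite L_e il_cat ?size_padw ?size_nseq // il_cat ?size_tuple //.
  rewrite !e_cat -{1}(size_padw p) -(size_padw q) !e_il_nones !e_padw !eta_wr.
  by [].
- apply: leq_trans (leq_maxl 1 _).
  by apply: (C1_const (b := true)).
Qed.


Lemma down_closed m : dclosed (down m).
Proof. by move=> x y hy hxy; exact: mle_trans hxy hy. Qed.

Lemma Psi_shift j : Psi (j + (K + K)) <= cM * (Psi j * Psi (K + K)).
Proof. by apply/bigmax_leqP => m _; apply: split_bound; exact: down_closed. Qed.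

Lemma Psi_ctx j : Psi j <= (maxn 1 (C1 (fL (K + j + K)))) ^ cM.
Proof. by apply/bigmax_leqP => m _; exact: ctx_bound. Qed.

Lemma blocks t n : forall Q, dclosed Q -> C1 (G Q (t * n)) <= (cM * maxn 1 (Psi n)) ^ t.
Proof.
elim: t => [|t IH] Q dQ.
  rewrite mul0n expn0; apply: (C1_const (b := Q (e [::]))) => a b.
  by rewrite /G interleaveE !(size0nil (size_tuple _)).
rewrite mulSn; apply: leq_trans (split_bound _ _ dQ) _.
have H : Psi (t * n) <= (cM * maxn 1 (Psi n)) ^ t.
  by apply/bigmax_leqP => m _; apply: IH; exact: down_closed.
rewrite expnS mulnA; apply: leq_mul H; apply: leq_mul => //; exact: leq_maxr.
Qed.

Definition exA (s : seq M) := flatten [seq padw (wr m) ++ nseq K None | m <- s].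
Definition exB (s : seq M) := flatten [seq nseq K None ++ padw (wr m) | m <- s].

Lemma size_exA s : size (exA s) = size s * (K + K).
Proof.
by elim: s => //= m s IH; rewrite size_cat -/(exA s) IH (size_cat (padw (wr m))) size_padw size_nseq mulSn.
Qed.

Lemma size_exB s : size (exB s) = size s * (K + K).
Proof.
by elim: s => //= m s IH; rewrite size_cat -/(exB s) IH (size_cat (nseq K None)) size_padw size_nseq mulSn.
Qed.

Lemma e_ex s t : size s = size t -> e (il (exA s) (exB t)) = mprod (il s t).
Proof.
elim: s t => [|x s IH] [|y t] //= [] st.
rewrite -/(exA s) -/(exB t) il_cat; last first.
  by rewrite (size_cat (padw (wr x))) (size_cat (nseq K None)) !size_padw size_nseq.
rewrite il_cat ?size_padw ?size_nseq // !e_cat IH //.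
rewrite -{1}(size_padw x) -(size_padw y) e_il_nones e_il_nones' !e_padw !eta_wr.
by rewrite /il /= -/(il _ _) /mprod /= -/(mprod _) mmulA.
Qed.

Lemma expand (I : pred M) n :
  C1 (fun a b : n.-tuple M => I (mprod (interleave a b))) <= C1 (G I (n * (K + K))).
Proof.
pose al (a : n.-tuple M) : (n * (K + K)).-tuple (option S) := mkT _ None (exA a).
pose be (b : n.-tuple M) : (n * (K + K)).-tuple (option S) := mkT _ None (exB b).
apply: (C1_pull (al := al) (be := be)) => a b.
rewrite /G /= !interleaveE /al /be !mkTE ?size_exA ?size_exB ?size_tuple //.
by rewrite e_ex // !size_tuple.
Qed.


Lemma EL_ideal : order_ideal EL.
Proof.
apply/forallP=> x; apply/forallP=> y; apply/implyP=> /andP[yE hxy].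
rewrite inE; move: yE; rewrite inE; apply: L_le; by rewrite !eta_wr.
Qed.

Lemma ideal_dclosed (I : {set M}) : order_ideal I -> dclosed (fun x => x \in I).
Proof.
move=> /forallP hI x y yI hxy; have := hI x => /forallP/(_ y).
by rewrite yI hxy => /implyP; apply.
Qed.

Lemma lower n : N1L L n <= N1MI EL n.
Proof.
rewrite /N1L /N1MI /N1 leq_add2r; apply: leq_up_log.
apply: (C1_pull (al := map_tuple phi) (be := map_tuple phi)) => a b.
by rewrite /= !interleaveE L_e -map_il.
Qed.

Definition A0 := maxn 1 (cM * Psi (K + K)).
Definition c0 := up_log 2 ((cM * A0) ^ (K + K)).
Definition c1 := cM * (K + K).

Lemma upper (I : {set M}) n : order_ideal I -> K + K <= n ->
  N1MI I n <= c0 + c1 * up_log 2 (C1 (fL n)) + 2.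
Proof.
move=> hI hn; have dI := ideal_dclosed hI.
have [j ->] : exists j, n = j + (K + K) by exists (n - (K + K)); rewrite subnK.
rewrite /N1MI /N1 leq_add2r.
set X := maxn 1 (C1 (fL (j + (K + K)))).
have h1 : C1 (fun a b : (j + (K + K)).-tuple M => mprod (interleave a b) \in I)
    <= (cM * maxn 1 (Psi (j + (K + K)))) ^ (K + K).
  apply: leq_trans (expand (fun x => x \in I) _) _; rewrite mulnC; exact: blocks.
have Xpos : 0 < X by rewrite leq_max.
have h2 : maxn 1 (Psi (j + (K + K))) <= A0 * X ^ cM.
  rewrite geq_max muln_gt0 expn_gt0 Xpos leq_max /=.
  apply: leq_trans (Psi_shift j) _.
  have := Psi_ctx j; rewrite (_ : K + j + K = j + (K + K)); last first.
    by rewrite addnAC addnC.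
  move=> hj; rewrite mulnCA mulnC; apply: leq_mul hj; exact: leq_maxr.
apply: leq_trans (leq_up_log 2 h1) _.
apply: leq_trans (leq_up_log 2 (expn_le (K + K) (leq_mul (leqnn cM) h2))) _.
rewrite mulnA expnMn -expnM (mulnC cM) -/c1.
apply: leq_trans (up_log_mulexp _ _ _) _; rewrite /c0 (mulnC A0) leq_add2l.
by rewrite leq_mul2l up_log_max1 orbT.
Qed.

End Main.

Theorem theorem4p1 (S : finType) (L : pred (seq S)) (M : fin_ord_monoid)
    (eta : seq S -> M) :
  regular L -> syntactic_ordered_monoid L eta ->
  BigTheta (N1M M) (N1L L).
Proof.
move=> _ [h1 h2 h3 h4].
exists (c0 h3 + c1 h3 + 1); split; first by rewrite addn1.
exists (K h3 + K h3) => n hn.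
have hL : N1L L n <= N1M M n.
  apply: leq_trans (lower h1 h2 h3 h4 n) _.
  by rewrite /N1M (bigD1 (EL L h3)) ?EL_ideal //= leq_maxl.
split.
- rewrite /N1M; apply/bigmax_leqP => I hI.
  apply: leq_trans (upper (eta_surj := h3) h1 h2 h4 hI hn) _.
  rewrite /N1L /N1; exact: arith.
- apply: leq_trans hL _; apply: leq_pmull; by rewrite addn1.
Qed.
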